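(* Let $a,b,c$ be pairwise distinct positive real numbers, and let $G_1,G_2$ be the metric graphs described in the context, with Dirichlet standard boundary conditions. Then $G_1$ and $G_2$ have different heat contents: there exists $t>0$ with $q_{G_1}(t)\neq q_{G_2}(t)$.
   Context: A compact metric graph is a finite connected graph without loops in which each edge $e$ is identified with an interval $[0,l_e]$. The Laplacian $\Delta$ acts as $\phi_e\mapsto\phi_e''$ on edges. Dirichlet standard boundary conditions (DSBC) require $H^2$ regularity on edges and the following vertex conditions: - continuity at vertices of degree $\ge2$; - vanishing at degree-one vertices; - at each vertex of degree $\ne1$, the sum of derivatives along incident edges directed into the vertex is zero. With $-\Delta$ having eigenvalues $\lambda$ and an orthonormal basis of real eigenfunctions $\phi_\lambda$, the heat content is $q_G(t)=\sum_\lambda e^{-\lambda t}(\int_G\phi_\lambda)^2$. The graph $G_1$ has 16 vertices: - a central vertex $o$; - three vertices $m_1,m_2,m_3$; - three vertices $w_1,w_2,w_3$; - nine vertices of degree one. The edges of $G_1$ are: - $o m_1$ of length $2c$, $o m_2$ of length $2a$, $o m_3$ of length $2b$; - $m_1 w_1$ of length $2b$, $m_2 w_2$ of length $2c$, $m_3 w_3$ of length $2a$; - a pendant edge (ending at a degree-one vertex) at $m_1$ of length $a$, at $m_2$ of length $b$, and at $m_3$ of length $c$; - two pendant edges at $w_1$ of lengths $a$ and $c$, two at $w_2$ of lengths $a$ and $b$, and two at $w_3$ of lengths $b$ and $c$. The graph $G_2$ is obtained from $G_1$ by interchanging the roles of $b$ and $c$. Explicitly, its edges are: - $o m_1$ of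 length $2b$, $o m_2$ of length $2a$, $o m_3$ of length $2c$; - $m_1w_1$ of length $2c$, $m_2w_2$ of length $2b$, $m_3w_3$ of length $2a$; - a pendant edge at $m_1$ of length $a$, at $m_2$ of length $c$, and at $m_3$ of length $b$; - two pendant edges at $w_1$ of lengths $a,b$, at $w_2$ of lengths $a,c$, and at $w_3$ of lengths $c,b$. *)

(* Defs.v *)
From Stdlib Require Import Reals List Arith ClassicalEpsilon.
Import ListNotations.
Open Scope R_scope.

(** An (oriented) edge is a triple (tail, head, length); vertices are natural
    numbers.  Edge [e] is identified with the interval [0, l_e], position 0
    being the tail and position l_e the head.  A function on the graph is [f : nat -> R -> R],
    [f i] being its restriction to edge number [i] (only values on
    [0, l_i] matter). *)
Definition edge : Type := (nat * nat * R)%type.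
Definition mgraph : Type := list edge.

Definition etail (G : mgraph) (i : nat) : nat :=
  let '(u, _, _) := nth i G (0%nat, 0%nat, 0) in u.
Definition ehead (G : mgraph) (i : nat) : nat :=
  let '(_, v, _) := nth i G (0%nat, 0%nat, 0) in v.
Definition elen (G : mgraph) (i : nat) : R :=
  let '(_, _, l) := nth i G (0%nat, 0%nat, 0) in l.

Definition esum (G : mgraph) (F : nat -> R) : R :=
  fold_right (fun i acc => F i + acc) 0 (seq 0 (length G)).

Definition degree (G : mgraph) (v : nat) : nat :=
  (length (filter (fun i => Nat.eqb (etail G i) v) (seq 0 (length G))) +
   length (filter (fun i => Nat.eqb (ehead G i) v) (seq 0 (length G))))%nat.

Definition eend (G : mgraph) (i : nat) (h : bool) : nat :=
  if h then ehead G i else etail G i.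

Definition endval (G : mgraph) (f : nat -> R -> R) (i : nat) (h : bool) : R :=
  if h then f i (elen G i) else f i 0.

(** Derivative of [f] (with derivative [d]) at the end [(i,h)], taken in the
    direction pointing into the vertex. *)
Definition inder (G : mgraph) (d : nat -> R -> R) (i : nat) (h : bool) : R :=
  if h then d i (elen G i) else - d i 0.

(** Riemann integral (0 if the function is not Riemann integrable). *)
Definition RInt (f : R -> R) (a b : R) : R :=
  match excluded_middle_informative (exists pr : Riemann_integrable f a b, True) with
  | left H => RiemannInt (proj1_sig (constructive_indefinite_description _ H))
  | right _ => 0
  end.

Definition gint (G : mgraph) (f : nat -> R -> R) : R :=
  esum G (fun i => RInt (f i) 0 (elen G i)).
Definition ip (G : mgraph) (f g : nat -> R -> R) : R :=
  esum G (fun i => RInt (fun x => f i x * g i x) 0 (elen G i)).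

Definition DSBC (G : mgraph) (phi d : nat -> R -> R) : Prop :=
  (forall v, (2 <= degree G v)%nat ->
     forall i j hi hj, (i < length G)%nat -> (j < length G)%nat ->
       eend G i hi = v -> eend G j hj = v ->
       endval G phi i hi = endval G phi j hj) /\
  (forall v, degree G v = 1%nat ->
     forall i hi, (i < length G)%nat -> eend G i hi = v -> endval G phi i hi = 0) /\
  (forall v, degree G v <> 1%nat ->
     esum G (fun i => (if Nat.eqb (ehead G i) v then inder G d i true else 0)
                    + (if Nat.eqb (etail G i) v then inder G d i false else 0)) = 0).

(** [phi] is a (real) eigenfunction of [-Laplacian] with DSBC and eigenvalue
    [lam]: on each edge it is (the restriction of) a twice differentiable
    function with [phi'' = - lam * phi] on [0, l_e] (H^2 regularity), and it
    satisfies the vertex conditions. *)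
Definition is_eigenfunction (G : mgraph) (lam : R) (phi : nat -> R -> R) : Prop :=
  exists d d2 : nat -> R -> R,
    (forall i x, (i < length G)%nat ->
       derivable_pt_lim (phi i) x (d i x) /\ derivable_pt_lim (d i) x (d2 i x)) /\
    (forall i x, (i < length G)%nat -> 0 <= x <= elen G i ->
       d2 i x = - lam * phi i x) /\
    DSBC G phi d.

(** Completeness is expressed by Parseval's identity on the dense class of
    continuous functions. *)
Definition eigenbasis (G : mgraph) (lam : nat -> R) (phi : nat -> nat -> R -> R) : Prop :=
  (forall n, is_eigenfunction G (lam n) (phi n)) /\
  (forall n m, ip G (phi n) (phi m) = if Nat.eqb n m then 1 else 0) /\
  (forall f : nat -> R -> R, (forall i, continuity (f i)) ->
     infinite_sum (fun n => (ip G f (phi n)) ^ 2) (ip G f f)).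

Definition heat_content (G : mgraph) (lam : nat -> R) (phi : nat -> nat -> R -> R)
  (t q : R) : Prop :=
  infinite_sum (fun n => exp (- lam n * t) * (gint G (phi n)) ^ 2) q.

(** The graphs G1 and G2.  Vertices: o = 0, m1 = 1, m2 = 2, m3 = 3,
    w1 = 4, w2 = 5, w3 = 6, degree-one vertices 7..15. *)
Definition G1 (a b c : R) : mgraph :=
  [ (0%nat, 1%nat, 2*c); (0%nat, 2%nat, 2*a); (0%nat, 3%nat, 2*b);
    (1%nat, 4%nat, 2*b); (2%nat, 5%nat, 2*c); (3%nat, 6%nat, 2*a);
    (1%nat, 7%nat, a); (2%nat, 8%nat, b); (3%nat, 9%nat, c);
    (4%nat, 10%nat, a); (4%nat, 11%nat, c); (5%nat, 12%nat, a); (5%nat, 13%nat, b); (6%nat, 14%nat, b); (6%nat, 15%nat, c) ].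

Definition G2 (a b c : R) : mgraph :=
  [ (0%nat, 1%nat, 2*b); (0%nat, 2%nat, 2*a); (0%nat, 3%nat, 2*c);
    (1%nat, 4%nat, 2*c); (2%nat, 5%nat, 2*b); (3%nat, 6%nat, 2*a);
    (1%nat, 7%nat, a); (2%nat, 8%nat, c); (3%nat, 9%nat, b);
    (4%nat, 10%nat, a); (4%nat, 11%nat, b); (5%nat, 12%nat, a); (5%nat, 13%nat, c); (6%nat, 14%nat, c); (6%nat, 15%nat, b) ].

(* Main.v *)
Require Import Defs.
From Stdlib Require Import Reals Lra Lia ZArith List ClassicalEpsilon FunctionalExtensionality Classical.
From Coquelicot Require Import Coquelicot.
Import ListNotations.
Open Scope R_scope.

Lemma nat_above (r : R) : exists n : nat, r < INR n.
Proof.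
  destruct (archimed r) as [H1 _].
  destruct (Z_lt_le_dec (up r) 0) as [Hz|Hz].
  - exists 0%nat. simpl. apply IZR_lt in Hz. lra.
  - exists (Z.to_nat (up r)). rewrite INR_IZR_INZ. rewrite Z2Nat.id by lia. lra.
Qed.

Fixpoint geo (K : nat) (x : R) : R :=
  match K with O => 0 | S K' => geo K' x + exp (- (INR (S K')) * x) end.
Definition sK (K : nat) (x : R) : R := x * geo K x.

Lemma exp_nat (K : nat) (x : R) : exp (- INR K * x) = exp (- x) ^ K.
Proof.
  induction K.
  - simpl. replace (- 0 * x) with 0 by ring. apply exp_0.
  - rewrite S_INR. change (exp (- x) ^ S K) with (exp (-x) * exp (-x) ^ K).
    rewrite <- IHK. rewrite <- exp_plus. f_equal. ring.
Qed.

Lemma geo_closed (K : nat) (x : R) : 0 < x ->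
  geo K x * (1 - exp (- x)) = exp (-x) * (1 - exp (-x) ^ K).
Proof.
  intros Hx. induction K.
  - simpl. ring.
  - change (geo (S K) x) with (geo K x + exp (- (INR (S K)) * x)).
    rewrite Rmult_plus_distr_r, IHK, exp_nat. simpl. ring.
Qed.

Lemma exp_neg_lt1 (x : R) : 0 < x -> 0 < exp (- x) < 1.
Proof.
  intros Hx. split. apply exp_pos.
  rewrite <- exp_0. apply exp_increasing. lra.
Qed.

Lemma pow_bounds (r : R) (K : nat) : 0 < r < 1 -> 0 < r ^ K <= 1.
Proof.
  intros Hr. induction K; simpl. lra.
  split. apply Rmult_lt_0_compat; lra. 
  assert (r * r ^ K <= 1 * 1) by (apply Rmult_le_compat; lra). lra.
Qed.

Lemma sK_zero (K : nat) : sK K 0 = 0.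
Proof. unfold sK. ring. Qed.

Lemma sK_bounds (K : nat) (x : R) : 0 <= x -> 0 <= sK K x <= 1.
Proof.
  intros Hx. destruct (Req_dec x 0) as [->|Hx0].
  - rewrite sK_zero. lra.
  - assert (Hxp : 0 < x) by lra.
    pose proof (exp_neg_lt1 x Hxp) as Hr. set (r := exp (-x)) in *.
    pose proof (geo_closed K x Hxp) as Hg. fold r in Hg.
    pose proof (pow_bounds r K Hr) as Hp.
    assert (He : 1 + x <= exp x) by apply exp_ineq1_le.
    assert (Hrx : r * exp x = 1) by (unfold r; rewrite <- exp_plus; replace (-x+x) with 0 by ring; apply exp_0).
    unfold sK.
    assert (Hgeo : geo K x = r * (1 - r ^ K) / (1 - r)) by (field_simplify_eq; [lra|lra]).
    rewrite Hgeo.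
    split.
    + apply Rmult_le_pos. lra. unfold Rdiv. apply Rmult_le_pos.
      apply Rmult_le_pos; lra. left. apply Rinv_0_lt_compat. lra.
    +
      assert (x * r <= 1 - r) by nra.
      apply Rmult_le_reg_r with (1 - r). lra.
      field_simplify; [|lra]. nra.
Qed.

Lemma sK_lower (K : nat) (x : R) : 0 < x ->
  1 - x - exp (- INR K * x) <= sK K x.
Proof.
  intros Hxp.
  pose proof (exp_neg_lt1 x Hxp) as Hr. rewrite exp_nat. set (r := exp (-x)) in *.
  pose proof (geo_closed K x Hxp) as Hg. fold r in Hg.
  pose proof (pow_bounds r K Hr) as Hp.
  assert (He : 1 + - x <= exp (- x)) by apply exp_ineq1_le. fold r in He.
  unfold sK.
  assert (Hgeo : geo K x = r * (1 - r ^ K) / (1 - r)) by (field_simplify_eq; [lra|lra]).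
  rewrite Hgeo.
  assert (H1 : (1 - x) * (1 - r) <= x * r) by nra.
  apply Rle_trans with ((1 - x) * (1 - r ^ K)). nra.
  apply Rmult_le_reg_r with (1 - r). lra.
  field_simplify; [|lra]. nra.
Qed.

Fixpoint ksum (Q : R -> R) (h : R) (K : nat) : R :=
  match K with O => 0 | S K' => ksum Q h K' + h * Q (INR (S K') * h) end.

Lemma is_series_zero (a : nat -> R) : (forall n, a n = 0) -> is_series a 0.
Proof.
  intros Ha. apply is_series_Reals. intros eps Heps. exists 0%nat. intros n _.
  assert (sum_f_R0 a n = 0).
  { induction n; simpl. apply Ha. rewrite IHn, Ha. ring. }
  rewrite H. unfold Rdist. rewrite Rminus_0_r, Rabs_R0. lra.
Qed.

Lemma series_ksum (lam c e : nat -> R) (Q : R -> R) :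
  (forall t, 0 < t -> is_series (fun n => exp (- lam n * t) * c n) (Q t)) ->
  (forall n, c n = lam n * e n) ->
  forall h, 0 < h -> forall K, is_series (fun n => e n * sK K (lam n * h)) (ksum Q h K).
Proof.
  intros HQ Hc h Hh K. induction K.
  - simpl. apply is_series_zero. intros n. unfold sK. simpl. ring.
  - change (ksum Q h (S K)) with (ksum Q h K + h * Q (INR (S K) * h)).
    assert (Ht : 0 < INR (S K) * h) by (apply Rmult_lt_0_compat; [apply lt_0_INR; lia|lra]).
    pose proof (is_series_scal h _ _ (HQ _ Ht)) as H2.
    pose proof (is_series_plus _ _ _ _ IHK H2) as H3.
    unfold sK. eapply is_series_ext; [|exact H3].
    intros n. change (geo (S K) (lam n * h)) with (geo K (lam n * h) + exp (- (INR (S K)) * (lam n * h))).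
    set (m := INR (S K)) in *. unfold plus, scal. simpl. unfold mult. simpl.
    unfold sK. rewrite Hc. replace (- lam n * (m * h)) with (- m * (lam n * h)) by ring. ring.
Qed.

Lemma partial_le (a : nat -> R) (l : R) : (forall n, 0 <= a n) -> infinite_sum a l ->
  forall N, sum_f_R0 a N <= l.
Proof.
  intros Ha Hl N. apply growing_ineq.
  - intros n. simpl. specialize (Ha (S n)). lra.
  - exact Hl.
Qed.

Lemma series_le (a b : nat -> R) (la lb : R) : infinite_sum a la -> infinite_sum b lb ->
  (forall n, a n <= b n) -> la <= lb.
Proof.
  intros Ha Hb Hab. apply Rle_cv_lim with (Un := sum_f_R0 a) (Vn := sum_f_R0 b); [|exact Ha|exact Hb].
  intros n. apply sum_Rle. intros; auto.
Qed.

Lemma series_nonneg (a : nat -> R) (l : R) : infinite_sum a l -> (forall n, 0 <= a n) -> 0 <= l.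
Proof.
  intros H Ha. apply Rle_trans with (sum_f_R0 a 0). simpl. apply Ha. apply partial_le; auto.
Qed.

Lemma exp_neg_le1 (y : R) : 0 <= y -> exp (- y) <= 1.
Proof.
  intros Hy. pose proof (exp_ineq1_le y). pose proof (exp_pos (-y)).
  assert (exp (- y) * exp y = 1) by (rewrite <- exp_plus; replace (-y+y) with 0 by ring; apply exp_0).
  nra.
Qed.

Definition specdata (lam c e : nat -> R) (L T : R) : Prop :=
  (forall n, 0 <= lam n) /\ (forall n, 0 <= e n) /\ (forall n, c n = lam n * e n) /\
  (forall n, lam n = 0 -> e n = 0) /\ infinite_sum c L /\ infinite_sum e T.

Definition Qf (lam c : nat -> R) (t : R) : R := Series (fun n => exp (- lam n * t) * c n).

Lemma heat_ex lam c e L T : specdata lam c e L T ->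
  forall t, 0 <= t -> ex_series (fun n => exp (- lam n * t) * c n).
Proof.
  intros (H0 & He & Hc & Hz & HL & HT) t Ht.
  apply (@ex_series_le R_AbsRing R_CompleteNormedModule) with (b := c).
  - intros n. unfold norm; simpl. unfold abs; simpl.
    assert (0 <= c n) by (rewrite Hc; apply Rmult_le_pos; auto).
    assert (0 < exp (- lam n * t) <= 1).
    { split. apply exp_pos. replace (- lam n * t) with (- (lam n * t)) by ring.
      apply exp_neg_le1. specialize (H0 n). nra. }
    rewrite Rabs_pos_eq by (apply Rmult_le_pos; lra). nra.
  - exists L. apply is_series_Reals. exact HL.
Qed.

Lemma ksum_series lam c e L T : specdata lam c e L T ->
  forall h, 0 < h -> forall K, is_series (fun n => e n * sK K (lam n * h)) (ksum (Qf lam c) h K).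
Proof.
  intros Hs h Hh K. pose proof Hs as (H0 & He & Hc & Hz & HL & HT).
  apply (series_ksum lam c e); auto.
  intros t Ht. apply Series_correct. apply (heat_ex _ _ _ _ _ Hs). lra.
Qed.

Lemma ksum_upper lam c e L T : specdata lam c e L T ->
  forall h, 0 < h -> forall K, ksum (Qf lam c) h K <= T.
Proof.
  intros Hs h Hh K. pose proof Hs as (H0 & He & Hc & Hz & HL & HT).
  pose proof (ksum_series _ _ _ _ _ Hs h Hh K) as H.
  apply is_series_Reals in H.
  apply (series_le _ _ _ _ H HT).
  intros n. assert (0 <= lam n * h) by (apply Rmult_le_pos; auto; lra).
  pose proof (sK_bounds K _ H1). specialize (He n). nra.
Qed.

Lemma single_K (en x d : R) : 0 <= en -> 0 < x -> 0 < d ->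
  exists K0 : nat, forall K, (K0 <= K)%nat -> en * exp (- INR K * x) <= d.
Proof.
  intros Hen Hx Hd. destruct (nat_above (en / (x * d))) as [K0 HK0].
  exists K0. intros K HK. apply le_INR in HK.
  assert (HKx : en <= d * INR K * x).
  { assert (en / (x * d) * (x * d) = en) by (field; lra).
    assert (0 < x * d) by nra. nra. }
  pose proof (exp_ineq1_le (INR K * x)) as HF.
  assert (HEF : exp (- INR K * x) * exp (INR K * x) = 1).
  { rewrite <- exp_plus. replace (- INR K * x + INR K * x) with 0 by ring. apply exp_0. }
  pose proof (exp_pos (- INR K * x)). pose proof (exp_pos (INR K * x)).
  assert (en <= d * exp (INR K * x)) by nra.
  nra.
Qed.

Lemma finite_K (lam e : nat -> R) (h d : R) : 0 < h -> 0 < d -> (forall n, 0 <= lam n) ->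
  (forall n, 0 <= e n) -> (forall n, lam n = 0 -> e n = 0) ->
  forall N, exists K0 : nat, forall K, (K0 <= K)%nat -> forall n, (n <= N)%nat ->
     e n * exp (- INR K * (lam n * h)) <= d.
Proof.
  intros Hh Hd H0 He Hz.
  assert (Hone : forall n, exists K0 : nat, forall K, (K0 <= K)%nat ->
     e n * exp (- INR K * (lam n * h)) <= d).
  { intros n. destruct (Req_dec (lam n) 0) as [Hl|Hl].
    - exists 0%nat. intros K _. rewrite (Hz n Hl). lra.
    - apply single_K; auto. specialize (H0 n). apply Rmult_lt_0_compat; lra. }
  induction N.
  - destruct (Hone 0%nat) as [K0 HK0]. exists K0. intros K HK n Hn.
    assert (n = 0%nat) by lia. subst. auto.
  - destruct IHN as [K1 HK1]. destruct (Hone (S N)) as [K2 HK2].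
    exists (Nat.max K1 K2). intros K HK n Hn.
    destruct (Nat.eq_dec n (S N)) as [->|Hne].
    + apply HK2. lia.
    + apply HK1. lia. lia.
Qed.

Lemma sum_lin (a b : nat -> R) (h d : R) (N : nat) :
  sum_f_R0 (fun n => a n - h * b n - d) N = sum_f_R0 a N - h * sum_f_R0 b N - (INR N + 1) * d.
Proof.
  induction N. simpl. ring. simpl sum_f_R0. rewrite IHN. rewrite S_INR. ring.
Qed.

Lemma ksum_lower lam c e L T : specdata lam c e L T ->
  forall eps h, 0 < eps -> 0 < h -> exists K, T - eps - h * L <= ksum (Qf lam c) h K.
Proof.
  intros Hs eps h Heps Hh. pose proof Hs as (H0 & He & Hc & Hz & HL & HT).
  destruct (HT (eps / 2)) as [N HN]. lra.
  specialize (HN N (Nat.le_refl N)). unfold Rdist in HN.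
  apply Rabs_def2 in HN.
  set (d := eps / (2 * (INR N + 1))).
  assert (Hd : 0 < d) by (unfold d; apply Rdiv_lt_0_compat; [lra| pose proof (pos_INR N); lra]).
  destruct (finite_K lam e h d Hh Hd H0 He Hz N) as [K HK].
  exists K.
  pose proof (ksum_series _ _ _ _ _ Hs h Hh K) as Hser. apply is_series_Reals in Hser.
  assert (Hnn : forall n, 0 <= e n * sK K (lam n * h)).
  { intros n. apply Rmult_le_pos; auto. apply sK_bounds. apply Rmult_le_pos; auto; lra. }
  pose proof (partial_le _ _ Hnn Hser N) as Hp.
  assert (Hc0 : forall n, 0 <= c n) by (intros n; rewrite Hc; apply Rmult_le_pos; auto).
  pose proof (partial_le _ _ Hc0 HL N) as HcL.
  assert (Hcmp : sum_f_R0 (fun n => e n - h * c n - d) N <= sum_f_R0 (fun n => e n * sK K (lam n * h)) N).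
  { apply sum_Rle. intros n Hn. specialize (HK K (Nat.le_refl K) n Hn).
    destruct (Req_dec (lam n) 0) as [Hl|Hl].
    - rewrite (Hc n), Hl, (Hz n Hl). replace (0 * h) with 0 by ring. rewrite sK_zero. lra.
    - assert (Hx : 0 < lam n * h) by (specialize (H0 n); apply Rmult_lt_0_compat; lra).
      pose proof (sK_lower K _ Hx). rewrite (Hc n). specialize (He n). nra. }
  rewrite sum_lin in Hcmp.
  assert (Hdd : (INR N + 1) * d = eps / 2) by (unfold d; field; pose proof (pos_INR N); lra).
  assert (h * sum_f_R0 c N <= h * L) by (apply Rmult_le_compat_l; lra).
  lra.
Qed.

Lemma ksum_ext (Q1 Q2 : R -> R) h : 0 < h -> (forall t, 0 < t -> Q1 t = Q2 t) ->
  forall K, ksum Q1 h K = ksum Q2 h K.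
Proof.
  intros Hh HQ K. induction K. reflexivity.
  change (ksum Q1 h (S K) = ksum Q2 h (S K)) with
    (ksum Q1 h K + h * Q1 (INR (S K) * h) = ksum Q2 h K + h * Q2 (INR (S K) * h)).
  rewrite IHK, HQ. reflexivity.
  apply Rmult_lt_0_compat; [apply lt_0_INR; lia | lra].
Qed.

Lemma T_le lam1 c1 e1 L1 T1 lam2 c2 e2 L2 T2 :
  specdata lam1 c1 e1 L1 T1 -> specdata lam2 c2 e2 L2 T2 ->
  (forall t, 0 < t -> Qf lam1 c1 t = Qf lam2 c2 t) -> T1 <= T2.
Proof.
  intros H1 H2 HQ.
  assert (HL1 : 0 <= L1).
  { destruct H1 as (H0 & He & Hc & Hz & HL & HT). apply (series_nonneg _ _ HL).
    intros n; rewrite Hc; apply Rmult_le_pos; auto. }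
  destruct (Rle_dec T1 T2) as [|Hn]; auto. exfalso.
  set (dl := (T1 - T2) / 4).
  assert (Hdl : 0 < dl) by (unfold dl; lra).
  set (h := dl / (L1 + 1)).
  assert (Hh : 0 < h) by (unfold h; apply Rdiv_lt_0_compat; lra).
  assert (HhL : h * L1 <= dl).
  { unfold h. apply Rmult_le_reg_r with (L1 + 1). lra. field_simplify; [|lra]. nra. }
  destruct (ksum_lower _ _ _ _ _ H1 dl h Hdl Hh) as [K HK].
  pose proof (ksum_upper _ _ _ _ _ H2 h Hh K).
  rewrite (ksum_ext _ _ h Hh HQ K) in HK. unfold dl in *. lra.
Qed.

Lemma RInt_defs (f : R -> R) (l : R) : ex_RInt f 0 l -> Defs.RInt f 0 l = RInt f 0 l.
Proof.
  intros He. unfold Defs.RInt.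
  destruct (excluded_middle_informative _) as [H|H].
  - symmetry. apply RInt_Reals.
  - exfalso. apply H. exists (ex_RInt_Reals_0 _ _ _ He). exact I.
Qed.

Lemma cont_of_der (f df : R -> R) : (forall x, derivable_pt_lim f x (df x)) -> forall x, continuous f x.
Proof.
  intros H x. apply (ex_derive_continuous (K:=R_AbsRing) (V:=R_NormedModule)). exists (df x). apply is_derive_Reals. apply H.
Qed.

Lemma cont_mult (f g : R -> R) x : continuous f x -> continuous g x -> continuous (fun t => f t * g t) x.
Proof. intros. apply (continuous_mult f g); auto. Qed.

Lemma cont_plus (f g : R -> R) x : continuous f x -> continuous g x -> continuous (fun t => f t + g t) x.
Proof. intros. apply (continuous_plus f g); auto. Qed.

Lemma cont_const (c x : R) : continuous (fun _ : R => c) x.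
Proof. apply continuous_const. Qed.

Lemma exRI (f : R -> R) l : (forall x, continuous f x) -> ex_RInt f 0 l.
Proof. intros H. apply (ex_RInt_continuous (V:=R_CompleteNormedModule)). intros; apply H. Qed.

Lemma edge_ibp (u du d2u v dv d2v : R -> R) (al be l : R) :
  0 <= l ->
  (forall x, derivable_pt_lim u x (du x)) -> (forall x, derivable_pt_lim du x (d2u x)) ->
  (forall x, derivable_pt_lim v x (dv x)) -> (forall x, derivable_pt_lim dv x (d2v x)) ->
  (forall x, 0 <= x <= l -> d2v x = al * v x + be) ->
  RInt (fun x => du x * dv x) 0 l + al * RInt (fun x => u x * v x) 0 l + be * RInt u 0 l
  = u l * dv l - u 0 * dv 0.
Proof.
  intros Hl Hu Hdu Hv Hdv Hode.
  pose proof (cont_of_der _ _ Hu) as Cu. pose proof (cont_of_der _ _ Hdu) as Cdu.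
  pose proof (cont_of_der _ _ Hv) as Cv. pose proof (cont_of_der _ _ Hdv) as Cdv.
  assert (E1 : ex_RInt (fun x => du x * dv x) 0 l) by (apply exRI; intros; apply cont_mult; auto).
  assert (E2 : ex_RInt (fun x => u x * v x) 0 l) by (apply exRI; intros; apply cont_mult; auto).
  assert (E3 : ex_RInt u 0 l) by (apply exRI; auto).
  pose proof (is_RInt_plus _ _ _ _ _ _ (RInt_correct _ _ _ E1)
     (is_RInt_plus _ _ _ _ _ _ (is_RInt_scal _ _ _ al _ (RInt_correct _ _ _ E2))
                               (is_RInt_scal _ _ _ be _ (RInt_correct _ _ _ E3)))) as H1.
  assert (H2 : is_RInt (fun x => du x * dv x + u x * (al * v x + be)) 0 l (u l * dv l - u 0 * dv 0)).
  { assert (HH := is_RInt_derive (fun x => u x * dv x) (fun x => du x * dv x + u x * (al * v x + be)) 0 l).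
    unfold minus, plus, opp in HH; simpl in HH. replace (u l * dv l - u 0 * dv 0) with (u l * dv l + - (u 0 * dv 0)) by ring.
    apply HH.
    - intros x Hx. rewrite Rmin_left, Rmax_right in Hx by lra.
      rewrite <- Hode by lra.
      apply is_derive_Reals. apply derivable_pt_lim_mult; auto.
    - intros x Hx. apply cont_plus. apply cont_mult; auto.
      apply cont_mult; auto. apply cont_plus. apply cont_mult; auto. apply cont_const. apply cont_const. }
  apply (is_RInt_unique (V:=R_CompleteNormedModule)) in H1. apply (is_RInt_unique (V:=R_CompleteNormedModule)) in H2.
  unfold plus, scal in H1; simpl in H1; unfold mult in H1; simpl in H1.
  rewrite <- H2. etransitivity; [|etransitivity; [symmetry; exact H1|]].
  - ring.
  - apply RInt_ext. intros x _. unfold plus, scal; simpl. unfold mult; simpl. ring.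
Qed.



Lemma esum_ext G F H : (forall i, (i < length G)%nat -> F i = H i) -> esum G F = esum G H.
Proof.
  intros E. unfold esum.
  assert (forall l, (forall i, In i l -> F i = H i) ->
            fold_right (fun i acc => F i + acc) 0 l = fold_right (fun i acc => H i + acc) 0 l) as K.
  { induction l; simpl; intros Hl; auto. rewrite Hl, IHl; auto. }
  apply K. intros i Hi. apply in_seq in Hi. apply E. lia.
Qed.

Lemma esum_plus G F H : esum G (fun i => F i + H i) = esum G F + esum G H.
Proof. unfold esum. induction (seq 0 (length G)); simpl. ring. rewrite IHl. ring. Qed.

Lemma esum_scal G k F : esum G (fun i => k * F i) = k * esum G F.
Proof. unfold esum. induction (seq 0 (length G)); simpl. ring. rewrite IHl. ring. Qed.

Lemma esum_nonneg G F : (forall i, (i < length G)%nat -> 0 <= F i) -> 0 <= esum G F.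
Proof.
  intros E. unfold esum.
  assert (forall l, (forall i, In i l -> 0 <= F i) -> 0 <= fold_right (fun i acc => F i + acc) 0 l) as K.
  { induction l; simpl; intros Hl. lra. pose proof (Hl a (or_introl eq_refl)).
    assert (0 <= fold_right (fun i acc => F i + acc) 0 l) by (apply IHl; auto). lra. }
  apply K. intros i Hi. apply in_seq in Hi. apply E. lia.
Qed.

Lemma DR_plus f g l : (forall x, continuous f x) -> (forall x, continuous g x) ->
  Defs.RInt (fun x => f x + g x) 0 l = Defs.RInt f 0 l + Defs.RInt g 0 l.
Proof.
  intros Cf Cg. rewrite !RInt_defs; try (apply exRI; auto).
  - apply (RInt_plus (V:=R_CompleteNormedModule)); apply exRI; auto.
  - intros; apply cont_plus; auto.
Qed.

Lemma DR_scal k f l : (forall x, continuous f x) ->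
  Defs.RInt (fun x => k * f x) 0 l = k * Defs.RInt f 0 l.
Proof.
  intros Cf. rewrite !RInt_defs; try (apply exRI; auto).
  - apply (RInt_scal (V:=R_CompleteNormedModule)); apply exRI; auto.
  - intros; apply cont_mult; auto. apply cont_const.
Qed.

Lemma DR_ext f g l : (forall x, f x = g x) -> Defs.RInt f 0 l = Defs.RInt g 0 l.
Proof. intros E. f_equal. apply functional_extensionality. auto. Qed.

Lemma cont_R_of_der (f df : R -> R) : (forall x, derivable_pt_lim f x (df x)) -> continuity f.
Proof. intros H x. apply continuity_pt_filterlim. apply (cont_of_der f df H). Qed.

Definition onef : nat -> R -> R := fun _ _ => 1.

Section Spec.
Variable G : mgraph.
Hypothesis Hlen : forall i, (i < length G)%nat -> 0 < elen G i.
Hypothesis Hbnd : forall u du v dv, DSBC G u du -> DSBC G v dv ->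
  esum G (fun i => u i (elen G i) * dv i (elen G i) - u i 0 * dv i 0) = 0.
Variables w dw : nat -> R -> R.
Hypothesis Hw : forall i x, derivable_pt_lim (w i) x (dw i x).
Hypothesis Hdw : forall i x, derivable_pt_lim (dw i) x (-1).
Hypothesis Hwb : DSBC G w dw.

Lemma eigen_facts lam phi : is_eigenfunction G lam phi -> ip G phi phi = 1 ->
  0 <= lam /\ gint G phi = lam * ip G w phi.
Proof.
  intros [d [d2 [Hd [Hode Hb]]]] Hn.
  assert (Cw : forall i x, continuous (w i) x) by (intros i; apply cont_of_der with (dw i); auto).
  assert (Cdw : forall i x, continuous (dw i) x) by (intros i; apply cont_of_der with (fun _ => -1); auto).
  assert (Cp : forall i x, (i < length G)%nat -> continuous (phi i) x)
    by (intros i x Hi; apply cont_of_der with (d i); intros; apply Hd; auto).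
  assert (Cd : forall i x, (i < length G)%nat -> continuous (d i) x)
    by (intros i x Hi; apply cont_of_der with (d2 i); intros; apply Hd; auto).
  assert (En : forall i, (i < length G)%nat ->
     RInt (fun x => d i x * d i x) 0 (elen G i) + (- lam) * RInt (fun x => phi i x * phi i x) 0 (elen G i)
       + 0 * RInt (phi i) 0 (elen G i)
     = phi i (elen G i) * d i (elen G i) - phi i 0 * d i 0).
  { intros i Hi. apply edge_ibp with (d2u := d2 i) (d2v := d2 i).
    - specialize (Hlen i Hi); lra.
    - intros; apply Hd; auto. - intros; apply Hd; auto.
    - intros; apply Hd; auto. - intros; apply Hd; auto.
    - intros x Hx. rewrite Hode; auto. ring. }
  assert (Ebnd := Hbnd _ _ _ _ Hb Hb).
  assert (X : esum G (fun i => RInt (fun x => d i x * d i x) 0 (elen G i) + (-1) * (lam * Defs.RInt (fun x => phi i x * phi i x) 0 (elen G i)))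
             = esum G (fun i => phi i (elen G i) * d i (elen G i) - phi i 0 * d i 0)).
  { apply esum_ext. intros i Hi. rewrite <- En by auto.
    rewrite RInt_defs. ring. apply exRI. intros; apply cont_mult; auto. }
  rewrite esum_plus, esum_scal, esum_scal in X.
  assert (Sum1 : esum G (fun i => RInt (fun x => d i x * d i x) 0 (elen G i)) - lam * ip G phi phi = 0)
    by (unfold ip; lra).
  rewrite Hn in Sum1.
  split.
  - assert (0 <= esum G (fun i => RInt (fun x => d i x * d i x) 0 (elen G i))).
    { apply esum_nonneg. intros i Hi. apply RInt_ge_0. specialize (Hlen i Hi); lra.
      apply exRI. intros; apply cont_mult; auto. intros. apply Rle_0_sqr. }
    lra.
  -
    assert (Gr1 : forall i, (i < length G)%nat ->
       RInt (fun x => dw i x * d i x) 0 (elen G i) + (- lam) * RInt (fun x => w i x * phi i x) 0 (elen G i)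
         + 0 * RInt (w i) 0 (elen G i)
       = w i (elen G i) * d i (elen G i) - w i 0 * d i 0).
    { intros i Hi. apply edge_ibp with (d2u := fun _ => -1) (d2v := d2 i).
      - specialize (Hlen i Hi); lra.
      - auto. - auto.
      - intros; apply Hd; auto. - intros; apply Hd; auto.
      - intros x Hx. rewrite Hode; auto. ring. }
    assert (Gr2 : forall i, (i < length G)%nat ->
       RInt (fun x => d i x * dw i x) 0 (elen G i) + 0 * RInt (fun x => phi i x * w i x) 0 (elen G i)
         + (-1) * RInt (phi i) 0 (elen G i)
       = phi i (elen G i) * dw i (elen G i) - phi i 0 * dw i 0).
    { intros i Hi. apply edge_ibp with (d2u := d2 i) (d2v := fun _ => -1).
      - specialize (Hlen i Hi); lra.
      - intros; apply Hd; auto. - intros; apply Hd; auto.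
      - auto. - auto.
      - intros x Hx. ring. }
    pose proof (Hbnd _ _ _ _ Hwb Hb) as B1. pose proof (Hbnd _ _ _ _ Hb Hwb) as B2.
    assert (esum G (fun i => (- lam) * Defs.RInt (fun x => w i x * phi i x) 0 (elen G i)
                         + Defs.RInt (phi i) 0 (elen G i)) = 0) as Z.
    { assert (X2 : esum G (fun i => (- lam) * Defs.RInt (fun x => w i x * phi i x) 0 (elen G i)
                         + Defs.RInt (phi i) 0 (elen G i)) =
              esum G (fun i : nat => w i (elen G i) * d i (elen G i) - w i 0 * d i 0) +
              esum G (fun i : nat => (-1) * (phi i (elen G i) * dw i (elen G i) - phi i 0 * dw i 0))).
      { rewrite <- esum_plus. apply esum_ext. intros i Hi.
        rewrite <- Gr1, <- Gr2 by auto.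
        rewrite !RInt_defs.
        replace (RInt (fun x => dw i x * d i x) 0 (elen G i)) with (RInt (fun x => d i x * dw i x) 0 (elen G i))
          by (apply (RInt_ext (V:=R_CompleteNormedModule)); intros; simpl; ring).
        ring.
        all: apply exRI; intros; try apply cont_mult; auto. }
      rewrite X2, esum_scal, B1, B2. ring. }
    rewrite esum_plus, esum_scal in Z. unfold gint, ip. lra.
Qed.

Definition Tw := esum G (fun i => Defs.RInt (w i) 0 (elen G i)).

Lemma spec_from_basis lam phi : eigenbasis G lam phi ->
  specdata lam (fun n => (gint G (phi n))^2) (fun n => lam n * (ip G w (phi n))^2) (ip G onef onef) Tw.
Proof.
  intros [Hef [Hon Hpar]].
  assert (EF : forall n, 0 <= lam n /\ gint G (phi n) = lam n * ip G w (phi n)).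
  { intros n. apply eigen_facts. apply Hef. rewrite Hon, Nat.eqb_refl. reflexivity. }
  assert (Cw : forall i x, continuous (w i) x) by (intros i; apply cont_of_der with (dw i); auto).
  assert (Cp : forall n i x, (i < length G)%nat -> continuous (phi n i) x).
  { intros n i x Hi. destruct (Hef n) as [d [d2 [Hd _]]].
    apply cont_of_der with (d i); intros; apply Hd; auto. }
  assert (X1 : forall n, ip G onef (phi n) = gint G (phi n)).
  { intros n. unfold ip, gint, onef. apply esum_ext. intros i Hi. apply DR_ext. intros; ring. }
  assert (X2 : forall n, ip G (fun i x => 1 + w i x) (phi n) = gint G (phi n) + ip G w (phi n)).
  { intros n. unfold ip, gint. rewrite <- esum_plus. apply esum_ext. intros i Hi.
    rewrite <- DR_plus. apply DR_ext; intros; ring.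
    intros; auto. intros; apply cont_mult; auto. }
  assert (X3 : ip G (fun i x => 1 + w i x) (fun i x => 1 + w i x) = ip G onef onef + 2 * Tw + ip G w w).
  { unfold ip, Tw, onef. rewrite <- esum_scal, <- !esum_plus. apply esum_ext. intros i Hi.
    rewrite <- DR_scal by auto. rewrite <- !DR_plus.
    apply DR_ext; intros; ring.
    all: intros; repeat first [apply cont_plus | apply cont_mult | apply cont_const | apply Cw]. }
  assert (P1 := Hpar onef ltac:(intros i; intros x; apply continuity_const; intros ? ?; reflexivity)).
  assert (P2 := Hpar w ltac:(intros i; apply cont_R_of_der with (dw i); auto)).
  assert (P3 := Hpar (fun i x => 1 + w i x)
     ltac:(intros i; apply continuity_plus; [apply continuity_const; intros ? ?; reflexivity | apply cont_R_of_der with (dw i); auto])).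
  apply is_series_Reals in P1, P2, P3.
  pose proof (is_series_scal (1/2) _ _ (is_series_minus _ _ _ _ (is_series_minus _ _ _ _ P3 P1) P2)) as P4.
  split; [|split; [|split; [|split; [|split]]]].
  - intros n; apply EF.
  - intros n. apply Rmult_le_pos. apply EF. apply pow2_ge_0.
  - intros n. destruct (EF n) as [_ E]. rewrite E. ring.
  - intros n Hl. rewrite Hl. ring.
  - apply is_series_Reals. eapply is_series_ext; [|exact P1]. intros n. simpl. rewrite X1. reflexivity.
  - apply is_series_Reals.
    replace Tw with (scal (1/2) (plus (plus (ip G (fun i x => 1 + w i x) (fun i x => 1 + w i x)) (opp (ip G onef onef))) (opp (ip G w w)))).
    2:{ rewrite X3. unfold scal, plus, opp; simpl. unfold mult; simpl. field. }
    eapply is_series_ext; [|exact P4]. intros n. simpl.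
    rewrite X1, X2. destruct (EF n) as [_ E]. rewrite E.
    unfold scal, plus, opp; simpl. unfold mult; simpl. field.
Qed.
End Spec.

Section S.
Variables x y z : R.
Let G := G1 x y z.

Lemma deg_int v : (v <= 6)%nat -> degree G v = 3%nat.
Proof. intros H. do 7 (destruct v as [|v]; [reflexivity|]). lia. Qed.

Lemma deg_leaf v : (7 <= v <= 15)%nat -> degree G v = 1%nat.
Proof. intros H. do 16 (destruct v as [|v]; [first [lia|reflexivity]|]). lia. Qed.

Lemma deg_big v : (16 <= v)%nat -> degree G v = 0%nat.
Proof. intros H. do 16 (destruct v as [|v]; [lia|]). reflexivity. Qed.
End S.

Lemma mul_zero_eq (U K : R) : K = 0 -> U * K = 0.
Proof. intros ->; ring. Qed.

Lemma bnd_G1 x y z (u du v dv : nat -> R -> R) :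
  DSBC (G1 x y z) u du -> DSBC (G1 x y z) v dv ->
  esum (G1 x y z) (fun i => u i (elen (G1 x y z) i) * dv i (elen (G1 x y z) i) - u i 0 * dv i 0) = 0.
Proof.
  intros [Hc [Hd _]] [_ [_ Hk]].
  assert (D : forall w, (w <= 6)%nat -> (2 <= degree (G1 x y z) w)%nat)
    by (intros w Hw; rewrite deg_int; auto).
  assert (Lf : forall w, (7 <= w <= 15)%nat -> degree (G1 x y z) w = 1%nat) by apply deg_leaf.
  assert (Kn : forall w, (w <= 6)%nat -> degree (G1 x y z) w <> 1%nat)
    by (intros w Hw; rewrite deg_int; auto).
  Ltac cnt Hc D i j hi hj w :=
    let H := fresh "C" in
    pose proof (Hc w (D w ltac:(lia)) i j hi hj ltac:(simpl; lia) ltac:(simpl; lia) eq_refl eq_refl) as H;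
    simpl in H; rewrite <- H.
  unfold esum. simpl.
  cnt Hc D 0%nat 1%nat false false 0%nat. cnt Hc D 0%nat 2%nat false false 0%nat.
  cnt Hc D 0%nat 3%nat true false 1%nat. cnt Hc D 0%nat 6%nat true false 1%nat.
  cnt Hc D 1%nat 4%nat true false 2%nat. cnt Hc D 1%nat 7%nat true false 2%nat.
  cnt Hc D 2%nat 5%nat true false 3%nat. cnt Hc D 2%nat 8%nat true false 3%nat.
  cnt Hc D 3%nat 9%nat true false 4%nat. cnt Hc D 3%nat 10%nat true false 4%nat.
  cnt Hc D 4%nat 11%nat true false 5%nat. cnt Hc D 4%nat 12%nat true false 5%nat.
  cnt Hc D 5%nat 13%nat true false 6%nat. cnt Hc D 5%nat 14%nat true false 6%nat.
  Ltac lf Hd Lf i w :=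
    let H := fresh "L" in
    pose proof (Hd w (Lf w ltac:(lia)) i true ltac:(simpl; lia) eq_refl) as H; simpl in H.
  lf Hd Lf 6%nat 7%nat. lf Hd Lf 7%nat 8%nat. lf Hd Lf 8%nat 9%nat. lf Hd Lf 9%nat 10%nat.
  lf Hd Lf 10%nat 11%nat. lf Hd Lf 11%nat 12%nat. lf Hd Lf 12%nat 13%nat. lf Hd Lf 13%nat 14%nat.
  lf Hd Lf 14%nat 15%nat.
  Ltac kf Hk Kn U w :=
    let H := fresh "K" in
    pose proof (mul_zero_eq U _ (Hk w (Kn w ltac:(lia)))) as H; unfold esum in H; simpl in H.
  kf Hk Kn (u 0%nat 0) 0%nat.
  kf Hk Kn (u 0%nat (2*z)) 1%nat.
  kf Hk Kn (u 1%nat (2*x)) 2%nat.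
  kf Hk Kn (u 2%nat (2*y)) 3%nat.
  kf Hk Kn (u 3%nat (2*y)) 4%nat.
  kf Hk Kn (u 4%nat (2*z)) 5%nat.
  kf Hk Kn (u 5%nat (2*x)) 6%nat.
  rewrite L, L0, L1, L2, L3, L4, L5, L6, L7.
  unfold elen in *; simpl in *.
  lra.
Qed.

Definition Dbr (q r M p : R) := q*r + (M+p)*(q+r).
Definition Ebr (L p M q r : R) := p*(q*r + M*(q+r)) + L * Dbr q r M p.
Definition Zp (x y z : R) : R :=
  Dbr x z (2*y) x * Ebr (2*x) y (2*z) x y * Ebr (2*y) z (2*x) y z
+ Dbr x y (2*z) y * Ebr (2*z) x (2*y) x z * Ebr (2*y) z (2*x) y z
+ Dbr y z (2*x) z * Ebr (2*z) x (2*y) x z * Ebr (2*x) y (2*z) x y.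
Definition PW0 (x y z : R) : R := (112 * y^4 * z^6 + 224 * y^5 * z^5 + 96 * y^6 * z^4 + 432 * x * y^3 * z^6 + 1472 * x * y^4 * z^5 + 1436 * x * y^5 * z^4 + 400 * x * y^6 * z^3 + 624 * x^2 * y^2 * z^6 + 3254 * x^2 * y^3 * z^5 + 5208 * x^2 * y^4 * z^4 + 3218 * x^2 * y^5 * z^3 + 624 * x^2 * y^6 * z^2 + 400 * x^3 * y * z^6 + 3218 * x^3 * y^2 * z^5 + 7711 * x^3 * y^3 * z^4 + 7711 * x^3 * y^4 * z^3 + 3254 * x^3 * y^5 * z^2 + 432 * x^3 * y^6 * z + 96 * x^4 * z^6 + 1436 * x^4 * y * z^5 + 5208 * x^4 * y^2 * z^4 + 7711 * x^4 * y^3 * z^3 + 5208 * x^4 * y^4 * z^2 + 1472 * x^4 * y^5 * z + 112 * x^4 * y^6 + 224 * x^5 * z^5 + 1472 * x^5 * y * z^4 + 3254 * x^5 * y^2 * z^3 + 3218 * x^5 * y^3 * z^2 + 1436 * x^5 * y^4 * z + 224 * x^5 * y^5 + 112 * x^6 * z^4 + 432 * x^6 * y * z^3 + 624 * x^6 * y^2 * z^2 + 400 * x^6 * y^3 * z + 96 * x^6 * y^4).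
Definition PW1 (x y z : R) : R := (64 * x * y^3 * z^6 + 264 * x * y^4 * z^5 + 320 * x * y^5 * z^4 + 112 * x * y^6 * z^3 + 176 * x^2 * y^2 * z^6 + 1048 * x^2 * y^3 * z^5 + 2012 * x^2 * y^4 * z^4 + 1462 * x^2 * y^5 * z^3 + 336 * x^2 * y^6 * z^2 + 160 * x^3 * y * z^6 + 1412 * x^3 * y^2 * z^5 + 3971 * x^3 * y^3 * z^4 + 4549 * x^3 * y^4 * z^3 + 2182 * x^3 * y^5 * z^2 + 336 * x^3 * y^6 * z + 48 * x^4 * z^6 + 756 * x^4 * y * z^5 + 3188 * x^4 * y^2 * z^4 + 5325 * x^4 * y^3 * z^3 + 3992 * x^4 * y^4 * z^2 + 1264 * x^4 * y^5 * z + 112 * x^4 * y^6 + 128 * x^5 * z^5 + 992 * x^5 * y * z^4 + 2450 * x^5 * y^2 * z^3 + 2654 * x^5 * y^3 * z^2 + 1292 * x^5 * y^4 * z + 224 * x^5 * y^5 + 80 * x^6 * z^4 + 336 * x^6 * y * z^3 + 528 * x^6 * y^2 * z^2 + 368 * x^6 * y^3 * z + 96 * x^6 * y^4).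
Definition PW2 (x y z : R) : R := (112 * y^4 * z^6 + 224 * y^5 * z^5 + 96 * y^6 * z^4 + 336 * x * y^3 * z^6 + 1264 * x * y^4 * z^5 + 1292 * x * y^5 * z^4 + 368 * x * y^6 * z^3 + 336 * x^2 * y^2 * z^6 + 2182 * x^2 * y^3 * z^5 + 3992 * x^2 * y^4 * z^4 + 2654 * x^2 * y^5 * z^3 + 528 * x^2 * y^6 * z^2 + 112 * x^3 * y * z^6 + 1462 * x^3 * y^2 * z^5 + 4549 * x^3 * y^3 * z^4 + 5325 * x^3 * y^4 * z^3 + 2450 * x^3 * y^5 * z^2 + 336 * x^3 * y^6 * z + 320 * x^4 * y * z^5 + 2012 * x^4 * y^2 * z^4 + 3971 * x^4 * y^3 * z^3 + 3188 * x^4 * y^4 * z^2 + 992 * x^4 * y^5 * z + 80 * x^4 * y^6 + 264 * x^5 * y * z^4 + 1048 * x^5 * y^2 * z^3 + 1412 * x^5 * y^3 * z^2 + 756 * x^5 * y^4 * z + 128 * x^5 * y^5 + 64 * x^6 * y * z^3 + 176 * x^6 * y^2 * z^2 + 160 * x^6 * y^3 * z + 48 * x^6 * y^4).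
Definition PW3 (x y z : R) : R := (80 * y^4 * z^6 + 128 * y^5 * z^5 + 48 * y^6 * z^4 + 336 * x * y^3 * z^6 + 992 * x * y^4 * z^5 + 756 * x * y^5 * z^4 + 160 * x * y^6 * z^3 + 528 * x^2 * y^2 * z^6 + 2450 * x^2 * y^3 * z^5 + 3188 * x^2 * y^4 * z^4 + 1412 * x^2 * y^5 * z^3 + 176 * x^2 * y^6 * z^2 + 368 * x^3 * y * z^6 + 2654 * x^3 * y^2 * z^5 + 5325 * x^3 * y^3 * z^4 + 3971 * x^3 * y^4 * z^3 + 1048 * x^3 * y^5 * z^2 + 64 * x^3 * y^6 * z + 96 * x^4 * z^6 + 1292 * x^4 * y * z^5 + 3992 * x^4 * y^2 * z^4 + 4549 * x^4 * y^3 * z^3 + 2012 * x^4 * y^4 * z^2 + 264 * x^4 * y^5 * z + 224 * x^5 * z^5 + 1264 * x^5 * y * z^4 + 2182 * x^5 * y^2 * z^3 + 1462 * x^5 * y^3 * z^2 + 320 * x^5 * y^4 * z + 112 * x^6 * z^4 + 336 * x^6 * y * z^3 + 336 * x^6 * y^2 * z^2 + 112 * x^6 * y^3 * z).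
Definition PW4 (x y z : R) : R := (32 * x * y^3 * z^6 + 136 * x * y^4 * z^5 + 176 * x * y^5 * z^4 + 64 * x * y^6 * z^3 + 112 * x^2 * y^2 * z^6 + 608 * x^2 * y^3 * z^5 + 1064 * x^2 * y^4 * z^4 + 680 * x^2 * y^5 * z^3 + 128 * x^2 * y^6 * z^2 + 128 * x^3 * y * z^6 + 956 * x^3 * y^2 * z^5 + 2273 * x^3 * y^3 * z^4 + 2109 * x^3 * y^4 * z^3 + 736 * x^3 * y^5 * z^2 + 64 * x^3 * y^6 * z + 48 * x^4 * z^6 + 612 * x^4 * y * z^5 + 2092 * x^4 * y^2 * z^4 + 2687 * x^4 * y^3 * z^3 + 1396 * x^4 * y^4 * z^2 + 232 * x^4 * y^5 * z + 128 * x^5 * z^5 + 784 * x^5 * y * z^4 + 1426 * x^5 * y^2 * z^3 + 1018 * x^5 * y^3 * z^2 + 248 * x^5 * y^4 * z + 80 * x^6 * z^4 + 240 * x^6 * y * z^3 + 240 * x^6 * y^2 * z^2 + 80 * x^6 * y^3 * z).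
Definition PW5 (x y z : R) : R := (64 * x * y^3 * z^6 + 232 * x * y^4 * z^5 + 248 * x * y^5 * z^4 + 80 * x * y^6 * z^3 + 128 * x^2 * y^2 * z^6 + 736 * x^2 * y^3 * z^5 + 1396 * x^2 * y^4 * z^4 + 1018 * x^2 * y^5 * z^3 + 240 * x^2 * y^6 * z^2 + 64 * x^3 * y * z^6 + 680 * x^3 * y^2 * z^5 + 2109 * x^3 * y^3 * z^4 + 2687 * x^3 * y^4 * z^3 + 1426 * x^3 * y^5 * z^2 + 240 * x^3 * y^6 * z + 176 * x^4 * y * z^5 + 1064 * x^4 * y^2 * z^4 + 2273 * x^4 * y^3 * z^3 + 2092 * x^4 * y^4 * z^2 + 784 * x^4 * y^5 * z + 80 * x^4 * y^6 + 136 * x^5 * y * z^4 + 608 * x^5 * y^2 * z^3 + 956 * x^5 * y^3 * z^2 + 612 * x^5 * y^4 * z + 128 * x^5 * y^5 + 32 * x^6 * y * z^3 + 112 * x^6 * y^2 * z^2 + 128 * x^6 * y^3 * z + 48 * x^6 * y^4).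
Definition PW6 (x y z : R) : R := (80 * y^4 * z^6 + 128 * y^5 * z^5 + 48 * y^6 * z^4 + 240 * x * y^3 * z^6 + 784 * x * y^4 * z^5 + 612 * x * y^5 * z^4 + 128 * x * y^6 * z^3 + 240 * x^2 * y^2 * z^6 + 1426 * x^2 * y^3 * z^5 + 2092 * x^2 * y^4 * z^4 + 956 * x^2 * y^5 * z^3 + 112 * x^2 * y^6 * z^2 + 80 * x^3 * y * z^6 + 1018 * x^3 * y^2 * z^5 + 2687 * x^3 * y^3 * z^4 + 2273 * x^3 * y^4 * z^3 + 608 * x^3 * y^5 * z^2 + 32 * x^3 * y^6 * z + 248 * x^4 * y * z^5 + 1396 * x^4 * y^2 * z^4 + 2109 * x^4 * y^3 * z^3 + 1064 * x^4 * y^4 * z^2 + 136 * x^4 * y^5 * z + 232 * x^5 * y * z^4 + 736 * x^5 * y^2 * z^3 + 680 * x^5 * y^3 * z^2 + 176 * x^5 * y^4 * z + 64 * x^6 * y * z^3 + 128 * x^6 * y^2 * z^2 + 64 * x^6 * y^3 * z).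
Definition NQ (x y z : R) : R := (44 * y^3 * z^5 + 92 * y^4 * z^4 + 44 * y^5 * z^3 + 132 * x * y^2 * z^5 + 508 * x * y^3 * z^4 + 508 * x * y^4 * z^3 + 132 * x * y^5 * z^2 + 132 * x^2 * y * z^5 + 832 * x^2 * y^2 * z^4 + 1452 * x^2 * y^3 * z^3 + 832 * x^2 * y^4 * z^2 + 132 * x^2 * y^5 * z + 44 * x^3 * z^5 + 508 * x^3 * y * z^4 + 1452 * x^3 * y^2 * z^3 + 1452 * x^3 * y^3 * z^2 + 508 * x^3 * y^4 * z + 44 * x^3 * y^5 + 92 * x^4 * z^4 + 508 * x^4 * y * z^3 + 832 * x^4 * y^2 * z^2 + 508 * x^4 * y^3 * z + 92 * x^4 * y^4 + 44 * x^5 * z^3 + 132 * x^5 * y * z^2 + 132 * x^5 * y^2 * z + 44 * x^5 * y^3).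
Definition WV (x y z : R) (v : nat) : R :=
  match v with
  | 0%nat => PW0 x y z / (2 * Zp x y z)
  | 1%nat => PW1 x y z / (2 * Zp x y z)
  | 2%nat => PW2 x y z / (2 * Zp x y z)
  | 3%nat => PW3 x y z / (2 * Zp x y z)
  | 4%nat => PW4 x y z / (2 * Zp x y z)
  | 5%nat => PW5 x y z / (2 * Zp x y z)
  | 6%nat => PW6 x y z / (2 * Zp x y z)
  | _ => 0 end.

Ltac pos := repeat first [ apply Rplus_lt_0_compat | apply Rmult_lt_0_compat | apply pow_lt ]; try lra.

Lemma Zp_pos x y z : 0 < x -> 0 < y -> 0 < z -> 0 < Zp x y z.
Proof. intros. unfold Zp, Ebr, Dbr. pos. Qed.

Lemma NQ_pos x y z : 0 < x -> 0 < y -> 0 < z -> 0 < NQ x y z.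
Proof. intros. unfold NQ. pos. Qed.

Definition wf (x y z : R) (i : nat) (t : R) : R :=
  WV x y z (etail (G1 x y z) i) + (WV x y z (ehead (G1 x y z) i) - WV x y z (etail (G1 x y z) i)) * t / elen (G1 x y z) i
  + t * (elen (G1 x y z) i - t) / 2.
Definition dwf (x y z : R) (i : nat) (t : R) : R :=
  (WV x y z (ehead (G1 x y z) i) - WV x y z (etail (G1 x y z) i)) / elen (G1 x y z) i + elen (G1 x y z) i / 2 - t.

Lemma der_quad (A B l t : R) : derivable_pt_lim (fun t => A + B * t / l + t * (l - t) / 2) t (B / l + l / 2 - t).
Proof.
  apply is_derive_Reals. auto_derive. auto. simpl. unfold Rdiv. lra.
Qed.

Lemma der_lin (C t : R) : derivable_pt_lim (fun t => C - t) t (-1).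
Proof. apply is_derive_Reals. auto_derive. auto. ring. Qed.

Lemma wf_der x y z i t : derivable_pt_lim (wf x y z i) t (dwf x y z i t).
Proof. unfold wf, dwf. apply der_quad. Qed.

Lemma dwf_der x y z i t : derivable_pt_lim (dwf x y z i) t (-1).
Proof. unfold dwf. apply der_lin with (C := _ / _ + _ / 2). Qed.

Lemma elen_pos x y z i : 0 < x -> 0 < y -> 0 < z -> (i < length (G1 x y z))%nat -> 0 < elen (G1 x y z) i.
Proof.
  intros Hx Hy Hz Hi. simpl in Hi.
  do 15 (destruct i as [|i]; [unfold elen; simpl; lra|]). lia.
Qed.

Lemma endval_wf x y z i h : 0 < x -> 0 < y -> 0 < z -> (i < length (G1 x y z))%nat ->
  endval (G1 x y z) (wf x y z) i h = WV x y z (eend (G1 x y z) i h).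
Proof.
  intros Hx Hy Hz Hi. pose proof (elen_pos x y z i Hx Hy Hz Hi).
  destruct h; unfold endval, eend, wf; cbv beta iota.
  - field. lra.
  - unfold Rdiv. ring.
Qed.

Lemma WV_big x y z v : (7 <= v)%nat -> WV x y z v = 0.
Proof. intros H. do 7 (destruct v as [|v]; [lia|]). reflexivity. Qed.

Lemma wf_DSBC x y z : 0 < x -> 0 < y -> 0 < z -> DSBC (G1 x y z) (wf x y z) (dwf x y z).
Proof.
  intros Hx Hy Hz. pose proof (Zp_pos x y z Hx Hy Hz) as HZ.
  split; [|split].
  - intros v Hv i j hi hj Hi Hj Ei Ej. rewrite !endval_wf by auto. rewrite Ei, Ej. reflexivity.
  - intros v Hv i hi Hi Ei. rewrite endval_wf by auto. rewrite Ei. apply WV_big.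
    destruct (Nat.le_gt_cases v 6) as [Hl|Hl]; [|lia].
    rewrite deg_int in Hv by auto. discriminate.
  - intros v Hv.
    destruct (Nat.le_gt_cases v 6) as [Hl|Hl].
    + do 7 (destruct v as [|v]; [unfold esum, inder, dwf; simpl; unfold elen; simpl; cbv beta iota delta [WV];
         unfold PW0, PW1, PW2, PW3, PW4, PW5, PW6, Zp, Ebr, Dbr in *; field; lra|]). lia.
    + destruct (Nat.le_gt_cases v 15) as [Hl2|Hl2].
      * exfalso. apply Hv. apply deg_leaf. lia.
      * do 16 (destruct v as [|v]; [lia|]). unfold esum; simpl. ring.
Qed.

Lemma int_quad (A B l : R) : 0 < l ->
  Defs.RInt (fun t => A + B * t / l + t * (l - t) / 2) 0 l = l * A + B * l / 2 + l ^ 3 / 12.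
Proof.
  intros Hl.
  assert (HI : is_RInt (fun t => A + B * t / l + t * (l - t) / 2) 0 l (l * A + B * l / 2 + l ^ 3 / 12)).
  { assert (HH := is_RInt_derive (fun t => A * t + B * t ^ 2 / (2 * l) + l * t ^ 2 / 4 - t ^ 3 / 6)
        (fun t => A + B * t / l + t * (l - t) / 2) 0 l).
    unfold minus, plus, opp in HH; simpl in HH.
    replace (l * A + B * l / 2 + l ^ 3 / 12) with
      (A * l + B * l ^ 2 / (2 * l) + l * l ^ 2 / 4 - l ^ 3 / 6 + - (A * 0 + B * 0 ^ 2 / (2 * l) + l * 0 ^ 2 / 4 - 0 ^ 3 / 6))
      by (field; lra).
    apply HH.
    - intros t _. auto_derive. auto. field. lra.
    - intros t _. apply cont_of_der with (fun t => B / l + l / 2 - t). intros; apply der_quad. }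
  rewrite RInt_defs. apply (is_RInt_unique (V:=R_CompleteNormedModule)). exact HI.
  eexists; exact HI.
Qed.

Definition Texpr (x y z : R) : R :=
  esum (G1 x y z) (fun i => elen (G1 x y z) i * WV x y z (etail (G1 x y z) i)
     + (WV x y z (ehead (G1 x y z) i) - WV x y z (etail (G1 x y z) i)) * elen (G1 x y z) i / 2
     + elen (G1 x y z) i ^ 3 / 12).

Lemma Tw_eq x y z : 0 < x -> 0 < y -> 0 < z -> Tw (G1 x y z) (wf x y z) = Texpr x y z.
Proof.
  intros Hx Hy Hz. unfold Tw, Texpr. apply esum_ext. intros i Hi.
  unfold wf. apply int_quad. apply elen_pos; auto.
Qed.

Lemma Zp_sym a b c : Zp a c b = Zp a b c.
Proof. unfold Zp, Ebr, Dbr. ring. Qed.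

Lemma Texpr_ne a b c : 0 < a -> 0 < b -> 0 < c -> a <> b -> b <> c -> a <> c ->
  Texpr a b c <> Texpr a c b.
Proof.
  intros Ha Hb Hc Hab Hbc Hac.
  pose proof (Zp_pos a b c Ha Hb Hc) as HZ. pose proof (NQ_pos a b c Ha Hb Hc) as HN.
  assert (key : (Texpr a b c - Texpr a c b) * Zp a b c = - ((b - c) * (a - b) * (a - c)) * NQ a b c).
  { unfold Texpr, esum. simpl. unfold elen. simpl. cbv beta iota delta [WV].
    rewrite (Zp_sym a b c). unfold PW0, PW1, PW2, PW3, PW4, PW5, PW6, NQ. field. lra. }
  intros E. rewrite E in key. rewrite Rminus_diag, Rmult_0_l in key.
  assert (P : (b - c) * (a - b) * (a - c) <> 0).
  { apply Rmult_integral_contrapositive_currified. apply Rmult_integral_contrapositive_currified.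
    all: lra. }
  assert (- ((b - c) * (a - b) * (a - c)) * NQ a b c <> 0).
  { apply Rmult_integral_contrapositive_currified. lra. lra. }
  lra.
Qed.

Lemma data_G1 x y z lam phi : 0 < x -> 0 < y -> 0 < z -> eigenbasis (G1 x y z) lam phi ->
  specdata lam (fun n => (gint (G1 x y z) (phi n))^2)
     (fun n => lam n * (ip (G1 x y z) (wf x y z) (phi n))^2) (ip (G1 x y z) onef onef) (Texpr x y z).
Proof.
  intros Hx Hy Hz Hb. rewrite <- Tw_eq by auto.
  apply spec_from_basis with (dw := dwf x y z); auto.
  - intros i Hi. apply elen_pos; auto.
  - intros u du v dv Hu Hv. apply (bnd_G1 x y z u du v dv); auto.
  - intros. apply wf_der.
  - intros. apply dwf_der.
  - apply wf_DSBC; auto.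
Qed.

Theorem mainTheorem3 (a b c : R) :
  0 < a -> 0 < b -> 0 < c -> a <> b -> b <> c -> a <> c ->
  forall (lam1 : nat -> R) (phi1 : nat -> nat -> R -> R)
         (lam2 : nat -> R) (phi2 : nat -> nat -> R -> R),
    eigenbasis (G1 a b c) lam1 phi1 ->
    eigenbasis (G2 a b c) lam2 phi2 ->
    exists t : R, 0 < t /\
      exists q1 q2 : R,
        heat_content (G1 a b c) lam1 phi1 t q1 /\
        heat_content (G2 a b c) lam2 phi2 t q2 /\
        q1 <> q2.
Proof.
  intros Ha Hb Hc Hab Hbc Hac lam1 phi1 lam2 phi2 H1 H2.
  change (G2 a b c) with (G1 a c b) in *.
  pose proof (data_G1 a b c lam1 phi1 Ha Hb Hc H1) as S1.
  pose proof (data_G1 a c b lam2 phi2 Ha Hc Hb H2) as S2.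
  apply NNPP. intros Hneg.
  assert (HQ : forall t, 0 < t -> Qf lam1 (fun n => (gint (G1 a b c) (phi1 n))^2) t =
                                 Qf lam2 (fun n => (gint (G1 a c b) (phi2 n))^2) t).
  { intros t Ht. apply NNPP. intros Hne. apply Hneg. exists t. split; auto.
    exists (Qf lam1 (fun n => (gint (G1 a b c) (phi1 n))^2) t),
           (Qf lam2 (fun n => (gint (G1 a c b) (phi2 n))^2) t).
    split; [|split; auto].
    - unfold heat_content, Qf. apply is_series_Reals. apply Series_correct.
      apply (heat_ex _ _ _ _ _ S1). lra.
    - unfold heat_content, Qf. apply is_series_Reals. apply Series_correct.
      apply (heat_ex _ _ _ _ _ S2). lra. }
  assert (T1 := T_le _ _ _ _ _ _ _ _ _ _ S1 S2 HQ).
  assert (T2 := T_le _ _ _ _ _ _ _ _ _ _ S2 S1 ltac:(intros; symmetry; auto)).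
  apply (Texpr_ne a b c); auto. lra.
Qed.
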